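(* Fix $n\ge 1$ and $p\ge 1$. Let $\{A^t\}_{t\ge 0}$ be a sequence of couplings of positive integral diamonds of Dynkin type $\mathbb{A}_n$ which is a $p$-cycle ($A^{t+p}=A^t$ for all $t$), considered through its terms $A^0,\dots,A^{2p-1}$. For $0\le i\le p-1$ consider the subsequence $\{B^{s}_{(i)}\}_{0\le s\le p-1}$ with $B^{s}_{(i)}=A^{i+s}$, and its infinite array $C^{(i)}=(c^{(i)}_{r,j})_{r\in\mathbb{Z},0\le j\le n+1}$ given by $c^{(i)}_{(s+1)+kp,\,j}=a^{i+s}_{1,j}$ ($0\le s\le p-1$, $k\in\mathbb{Z}$, $1\le j\le n$) and $c^{(i)}_{r,0}=c^{(i)}_{r,n+1}=1$. Then, for all $0\le i\le p-1$, these subsequences generate the same frieze pattern of order $n+3$.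
   Context: An $\mathbb{A}_n$-diamond over an integral domain $\mathbf{R}$ is a family $A=(a_{i,j})$ of elements of $\mathbf{R}$, with $a_{1,j}$ for $1\le j\le n+1$ and $a_{2,j}$ for $0\le j\le n$, such that (D1) $a_{2,0}=a_{1,n+1}=1$ and (D2) $a_{1,j}a_{2,j}-a_{2,j-1}a_{1,j+1}=1$ for $1\le j\le n$. For $\mathbf{R}=\mathbb{Z}$, $A$ is a positive integral diamond of Dynkin type $\mathbb{A}_n$ if it also satisfies (D3): there are integers $a,m_a$ with $1\le a\le\lfloor (n+2)/2\rfloor$ such that either $(a_{1,1},a_{2,1})=(a,a+m_a)$ or $(a_{1,1},a_{2,1})=(a+m_a,a)$, and $a_{1,2}=a^2+am_a-1$, where $1\le m_1\le n$ when $a=1$ and $0\le m_a\le n+2(1-a)$ when $a>1$. $A\models B$ (coupling) means $a_{2,j}=b_{1,j}$ for $1\le j\le n$; a sequence of couplings is $\{A^t\}_{t\ge0}$ with $A^t\models A^{t+1}$ for all $t$, and we write $A^t=(a^t_{i,j})$. An array $(c_{r,j})_{r\in\mathbb{Z},0\le j\le n+1}$ with $c_{r,0}=c_{r,n+1}=1$ is a frieze pattern of order $n+3$ if $c_{r,j}c_{r+1,j}-c_{r+1,j-1}c_{r,j+1}=1$ for all $r\in\mathbb{Z}$, $1\le j\le n$ (i.e. placing $c_{r,j}$ in row $j$, column $2r+j$, bordered by rows of zeros, yields a closed Coxeter frieze pattern). Two such arrays are regarded as the same frieze pattern if one is obtained from the other by a translation of the index $r$. *)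

(* Defs.v *)
From HB Require Import structures.
From mathcomp Require Import all_boot all_order all_algebra.
Set Implicit Arguments. Unset Strict Implicit. Unset Printing Implicit Defensive.
Import Order.TTheory GRing.Theory Num.Theory.
Local Open Scope ring_scope.

(* A diamond over R: two rows of entries; row1 j = a_{1,j} (1 <= j <= n+1),
   row2 j = a_{2,j} (0 <= j <= n).  Values outside these ranges are ignored. *)
Record diamond (R : Type) := Diamond { row1 : nat -> R ; row2 : nat -> R }.

Definition is_diamond (R : comRingType) (n : nat) (A : diamond R) : Prop :=
  row2 A 0 = 1 /\ row1 A n.+1 = 1 /\
  (forall j : nat, (1 <= j <= n)%N ->
     row1 A j * row2 A j - row2 A j.-1 * row1 A j.+1 = 1).

Definition D3 (n : nat) (A : diamond int) : Prop :=
  exists a m : int,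
    1 <= a <= ((n + 2) %/ 2)%N%:Z /\
    ((row1 A 1%N = a /\ row2 A 1%N = a + m) \/ (row1 A 1%N = a + m /\ row2 A 1%N = a)) /\
    row1 A 2%N = a ^+ 2 + a * m - 1 /\
    (a = 1 -> 1 <= m <= n%:Z) /\
    (1 < a -> 0 <= m <= n%:Z + 2 * (1 - a)).

Definition pos_int_diamond (n : nat) (A : diamond int) : Prop :=
  is_diamond n A /\ D3 n A.

Definition couples (R : Type) (n : nat) (A B : diamond R) : Prop :=
  forall j : nat, (1 <= j <= n)%N -> row2 A j = row1 B j.

Definition diamond_eq (R : Type) (n : nat) (A B : diamond R) : Prop :=
  (forall j : nat, (1 <= j <= n.+1)%N -> row1 A j = row1 B j) /\
  (forall j : nat, (j <= n)%N -> row2 A j = row2 B j).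

(* the array C^(i): c_{(s+1)+kp, j} = a^{i+s}_{1,j} (0<=s<=p-1), borders 1 *)
Definition sub_array (n p : nat) (A : nat -> diamond int) (i : nat)
  (r : int) (j : nat) : int :=
  if (j == 0%N) || (j == n.+1) then 1
  else row1 (A (i + `|((r - 1) %% p%:Z)%Z|)%N) j.

Definition is_frieze (n : nat) (c : int -> nat -> int) : Prop :=
  (forall r : int, c r 0%N = 1 /\ c r n.+1 = 1) /\
  (forall (r : int) (j : nat), (1 <= j <= n)%N ->
     c r j * c (r + 1) j - c (r + 1) j.-1 * c r j.+1 = 1).

Definition same_frieze (n : nat) (c c' : int -> nat -> int) : Prop :=
  exists d : int, forall (r : int) (j : nat), (j <= n.+1)%N -> c r j = c' (r + d) j.

(* Main.v *)
Require Import Defs.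
From mathcomp Require Import all_boot all_order all_algebra.
From mathcomp Require Import zify ring.
Set Implicit Arguments. Unset Strict Implicit. Unset Printing Implicit Defensive.
Import Order.TTheory GRing.Theory Num.Theory.
Notation row1 := Defs.row1.
Notation row2 := Defs.row2.

Section S.
Variables (n p : nat) (A : nat -> diamond int).
Hypothesis hp : (1 <= p)%N.
Hypothesis hper : forall t : nat, diamond_eq n (A (t + p)%N) (A t).

Lemma row1_per t k j : (1 <= j <= n.+1)%N -> row1 (A (t + k * p)%N) j = row1 (A t) j.
Proof.
move=> hj; elim: k => [|k IH]; first by rewrite mul0n addn0.
by rewrite mulSn addnCA addnC (proj1 (hper _)) // IH.
Qed.

Lemma row1_mod t t' j : (1 <= j <= n.+1)%N -> t %% p = t' %% p ->
  row1 (A t) j = row1 (A t') j.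
Proof.
move=> hj e.
rewrite (divn_eq t p) (divn_eq t' p) e addnC row1_per // addnC row1_per //.
Qed.

Definition tt (i : nat) (r : int) : nat := (i + `|((r - 1) %% p%:Z)%Z|)%N.

Lemma tt_mod i r : ((tt i r)%:Z %% p%:Z)%Z = ((i%:Z + r - 1) %% p%:Z)%Z.
Proof.
have p0 : (p%:Z != 0)%R by rewrite eqz_nat -lt0n.
rewrite /tt PoszD gez0_abs ?modz_ge0 // modzDmr.
by rewrite -GRing.addrA.
Qed.

Lemma nat_mod_eq a b : (a%:Z %% p%:Z)%Z = (b%:Z %% p%:Z)%Z -> a %% p = b %% p.
Proof. by rewrite !modz_nat => -[]. Qed.

End S.

Theorem proposition6 (n p : nat) (A : nat -> diamond int) :
  (1 <= n)%N -> (1 <= p)%N ->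
  (forall t : nat, pos_int_diamond n (A t)) ->
  (forall t : nat, couples n (A t) (A t.+1)) ->
  (forall t : nat, diamond_eq n (A (t + p)%N) (A t)) ->
  (forall i : nat, (i < p)%N -> is_frieze n (sub_array n p A i)) /\
  (forall i i' : nat, (i < p)%N -> (i' < p)%N ->
     same_frieze n (sub_array n p A i) (sub_array n p A i')).
Proof.
move=> hn hp hD hC hper.
have Emod : forall t t' j, (1 <= j <= n.+1)%N -> t %% p = t' %% p ->
  row1 (A t) j = row1 (A t') j by move=> *; apply: row1_mod.
split.
- move=> i hi.
  have L1 : forall r j, (1 <= j <= n.+1)%N ->
      sub_array n p A i r j = row1 (A (tt p i r)) j.
    move=> r j hj; rewrite /sub_array /tt.
    move: hj; have [->|j0] := eqVneq j 0%N; first by []. move=> hj.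
    have [->|jn] := eqVneq j n.+1.
      by have [_ [->]] := proj1 (hD (i + `|((r - 1) %% p%:Z)%Z|)%N).
    by [].
  have L2 : forall r j, (j <= n)%N ->
      sub_array n p A i (r + 1) j = row2 (A (tt p i r)) j.
    move=> r j hj; rewrite /sub_array.
    have [->|j0] := eqVneq j 0%N; first by have [-> _] := proj1 (hD (tt p i r)).
    have [e|jn] := eqVneq j n.+1; first by rewrite e ltnn in hj.
    rewrite /=.
    have hj1 : (1 <= j <= n)%N by rewrite hj lt0n j0.
    rewrite hC // -/(tt p i (r + 1)).
    apply: Emod; first by case/andP: hj1 => -> /= h; apply: leqW.
    apply: nat_mod_eq; rewrite tt_mod //.
    have -> : ((tt p i r).+1 : int) = (Posz (tt p i r) + 1)%R by rewrite -addn1 PoszD.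
    rewrite -[in RHS]modzDml tt_mod // modzDml; congr (_ %% _)%Z; ring.
  split.
  + by move=> r; rewrite /sub_array; split; rewrite !eqxx ?orbT.
  + move=> r j hj.
    case/andP: hj => h1 h2.
    have a1 : (1 <= j <= n.+1)%N by rewrite h1 (leqW h2).
    have a2 : (j.-1 <= n)%N by apply: leq_trans (leq_pred j) h2.
    have a3 : (1 <= j.+1 <= n.+1)%N by apply/andP; split; lia.
    rewrite (L1 _ _ a1) (L2 _ _ h2) (L2 _ _ a2) (L1 _ _ a3).
    by have [_ [_ ->]] := proj1 (hD (tt p i r)); last by rewrite h1 h2.
- move=> i i' hi hi'.
  exists (Posz i - Posz i')%R => r j hj.
  rewrite /sub_array.
  have [->|j0] := eqVneq j 0%N; first by [].
  have [->|jn] := eqVneq j n.+1; first by [].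
  rewrite /= -/(tt p i r) -/(tt p i' (r + (Posz i - Posz i'))%R).
  apply: Emod; first by apply/andP; split; lia.
  apply: nat_mod_eq; rewrite !tt_mod //.
  congr (_ %% _)%Z; ring.
Qed.
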